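(* A matrix $M\in\mathbb{R}_+^{p\times q}$ with $\operatorname{rank}(M)\ge 2$ is a slack matrix of some polytope if and only if $$\operatorname{conv}(\text{rows of }M)=\operatorname{aff}(\text{rows of }M)\cap\mathbb{R}_+^q.$$
   Context: For a polytope $P\subseteq\mathbb{R}^n$ with $\dim(P)\ge 1$, a slack matrix of $P$ is any matrix $S=[\mathbb{1},V]\cdot[w,-W]^T\in\mathbb{R}^{p\times q}$ (so $S_{ij}=w_j-W_jv_i$, with $v_i$ the $i$th row of $V$ and $W_j$ the $j$th row of $W$), where $V\in\mathbb{R}^{p\times n}$ satisfies $P=\operatorname{conv}(\text{rows of }V)$ and $W\in\mathbb{R}^{q\times n}$, $w\in\mathbb{R}^q$ satisfy $P=\{x\in\mathbb{R}^n: Wx\le w\}$. A matrix is a slack matrix of some polytope if it is a slack matrix of some polytope of dimension at least one. $\operatorname{aff}$ denotes affine hull. *)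

(* Defs.v *)
From HB Require Import structures.
From mathcomp Require Import all_boot all_order all_algebra.
From mathcomp Require Import reals.
Set Implicit Arguments. Unset Strict Implicit. Unset Printing Implicit Defensive.
Import Order.TTheory GRing.Theory Num.Theory.
Local Open Scope ring_scope.

Definition conv_rows (R : numDomainType) (m n : nat) (A : 'M[R]_(m, n))
  (x : 'rV[R]_n) : Prop :=
  exists l : 'I_m -> R, (forall i, 0 <= l i) /\ \sum_i l i = 1 /\
                        x = \sum_i l i *: row i A.

Definition aff_rows (R : numDomainType) (m n : nat) (A : 'M[R]_(m, n))
  (x : 'rV[R]_n) : Prop :=
  exists l : 'I_m -> R, \sum_i l i = 1 /\ x = \sum_i l i *: row i A.

Definition nonneg_vec (R : numDomainType) (n : nat) (x : 'rV[R]_n) : Prop :=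
  forall j, 0 <= x 0 j.

Definition dim_ge1 (R : numDomainType) (n : nat) (P : 'rV[R]_n -> Prop) : Prop :=
  exists x y, P x /\ P y /\ x <> y.

Definition slack_matrix_of (R : numDomainType) (n : nat) (P : 'rV[R]_n -> Prop)
  (p q : nat) (S : 'M[R]_(p, q)) : Prop :=
  exists (V : 'M[R]_(p, n)) (W : 'M[R]_(q, n)) (w : 'cV[R]_q),
    (forall x, P x <-> conv_rows V x) /\
    (forall x, P x <-> (forall j, (W *m x^T) j 0 <= w j 0)) /\
    S = row_mx (const_mx 1 : 'cV[R]_p) V *m (row_mx w (- W))^T.

Definition is_slack_matrix (R : numDomainType) (p q : nat) (S : 'M[R]_(p, q)) : Prop :=
  exists (n : nat) (P : 'rV[R]_n -> Prop), dim_ge1 P /\ slack_matrix_of P S.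

(* Main.v *)
Require Import Defs.
From HB Require Import structures.
From mathcomp Require Import all_boot all_order all_algebra.
From mathcomp Require Import reals.
Import Order.TTheory GRing.Theory Num.Theory.
Local Open Scope ring_scope.

Section H.
Variable R : realType.
Notation ones m := (const_mx 1 : 'cV[R]_m).

Lemma onesE m (c : 'rV[R]_m) : c *m ones m = (\sum_i c 0 i)%:M.
Proof.
rewrite [LHS]mx11_scalar; congr (_%:M); rewrite mxE; apply eq_bigr => i _.
by rewrite mxE mulr1.
Qed.

Lemma ones1 m (c : 'rV[R]_m) : (c *m ones m = 1) <-> (\sum_i c 0 i = 1).
Proof.
rewrite onesE; split; last by move=> ->.
by move/matrixP=> /(_ 0 0); rewrite !mxE eqxx mulr1n.
Qed.

Lemma combE m n (A : 'M[R]_(m, n)) (l : 'I_m -> R) :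
  \sum_i l i *: row i A = (\row_i l i) *m A.
Proof. by rewrite mulmx_sum_row; apply eq_bigr => i _; rewrite mxE. Qed.

Lemma conv_rowsE m n (A : 'M[R]_(m, n)) x : conv_rows A x <->
  exists c : 'rV_m, (forall i, 0 <= c 0 i) /\ c *m ones m = 1 /\ x = c *m A.
Proof.
split.
  case=> l [l0 [l1 ->]]; exists (\row_i l i); rewrite combE; split => //.
    by move=> i; rewrite mxE.
  by split => //; apply/ones1; rewrite -l1; apply eq_bigr => i _; rewrite mxE.
case=> c [c0 [/ones1 c1 ->]]; exists (fun i => c 0 i); split => //; split => //.
rewrite combE; congr (_ *m _); apply/matrixP => a b; by rewrite (ord1 a) mxE.
Qed.

Lemma aff_rowsE m n (A : 'M[R]_(m, n)) x : aff_rows A x <->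
  exists c : 'rV_m, c *m ones m = 1 /\ x = c *m A.
Proof.
split.
  case=> l [l1 ->]; exists (\row_i l i); rewrite combE; split => //.
  by apply/ones1; rewrite -l1; apply eq_bigr => i _; rewrite mxE.
case=> c [/ones1 c1 ->]; exists (fun i => c 0 i); split => //.
rewrite combE; congr (_ *m _); apply/matrixP => a b; by rewrite (ord1 a) mxE.
Qed.

Lemma nonneg_conv p q (M : 'M[R]_(p, q)) (M0 : forall i j, 0 <= M i j) x :
  conv_rows M x -> nonneg_vec x.
Proof.
case=> l [l0 [_ ->]] j; rewrite summxE; apply: sumr_ge0 => i _.
by rewrite !mxE mulr_ge0.
Qed.

Lemma conv_aff m n (A : 'M[R]_(m, n)) x : conv_rows A x -> aff_rows A x.
Proof. by case=> l [_ [l1 ->]]; exists l. Qed.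

Lemma fwd p q n (M : 'M[R]_(p, q)) (M0 : forall i j, 0 <= M i j)
  (P : 'rV[R]_n -> Prop) (V : 'M[R]_(p, n)) (W : 'M[R]_(q, n)) (w : 'cV[R]_q) :
  (forall x, P x <-> conv_rows V x) ->
  (forall x, P x <-> (forall j, (W *m x^T) j 0 <= w j 0)) ->
  M = row_mx (const_mx 1 : 'cV[R]_p) V *m (row_mx w (- W))^T ->
  forall x, conv_rows M x <-> (aff_rows M x /\ nonneg_vec x).
Proof.
move=> HV HW HM.
have HM' : M = ones p *m w^T - V *m W^T.
  by rewrite HM tr_row_mx mul_row_col linearN /= mulmxN.
have phi : forall c : 'rV_p, c *m ones p = 1 ->
    c *m M = w^T - (c *m V) *m W^T.
  by move=> c c1; rewrite HM' mulmxBr !mulmxA c1 mul1mx.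
move=> x; split.
  by move=> H; split; [exact: conv_aff | exact: nonneg_conv H].
case=> /aff_rowsE [c [c1 ->]] nn.
have : P (c *m V).
  apply/HW => j; have := nn j; rewrite phi //.
  have -> : (W *m (c *m V)^T) j 0 = ((c *m V) *m W^T)^T j 0.
    by rewrite [in RHS]trmx_mul trmxK.
  by rewrite !mxE subr_ge0.
move/HV/conv_rowsE=> [d [d0 [d1 e]]].
apply/conv_rowsE; exists d; split => //; split => //.
by rewrite phi // phi // e.
Qed.
Lemma two_rows p q (M : 'M[R]_(p, q)) : (2 <= \rank M)%N ->
  exists i k, row i M != row k M.
Proof.
move=> rk; case: (boolP [exists i, exists k, row i M != row k M]).
  by move=> /existsP [i /existsP [k h]]; exists i, k.
rewrite negb_exists => /forallP H; exfalso.
case: p M rk H => [|p'] M rk H.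
  by have := rank_leq_row M; case: (\rank M) rk.
have eM : M = ones p'.+1 *m row 0 M.
  apply/matrixP => i j; rewrite !mxE big_ord1 !mxE mul1r.
  have := H i; rewrite negb_exists => /forallP /(_ 0); rewrite negbK => /eqP.
  by move/matrixP => /(_ 0 j); rewrite !mxE.
have := mxrankM_maxr (ones p'.+1) (row 0 M); rewrite -eM.
have := rank_leq_row (row 0 M).
by case: (\rank M) rk => [|[|]] //; case: (\rank (row 0 M)) => [|[|]].
Qed.

Lemma rowones p q (a : 'rV[R]_q) (i : 'I_p) : row i (ones p *m a) = a.
Proof. by apply/matrixP => x y; rewrite (ord1 x) !mxE big_ord1 !mxE mul1r. Qed.

Lemma delta_conv m n (A : 'M[R]_(m, n)) i : conv_rows A (row i A).
Proof.
apply/conv_rowsE; exists (delta_mx 0 i); split.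
  by move=> j; rewrite mxE; case: (_ && _).
split; last by rewrite rowE.
by rewrite -rowE; apply/matrixP => x y; rewrite !ord1 !mxE.
Qed.

Lemma bwd p q (M : 'M[R]_(p, q)) (M0 : forall i j, 0 <= M i j) :
  (2 <= \rank M)%N ->
  (forall x : 'rV[R]_q, conv_rows M x <-> (aff_rows M x /\ nonneg_vec x)) ->
  is_slack_matrix M.
Proof.
move=> rk H.
have [i0 [k nik]] := @two_rows p q M rk.
pose a := row i0 M.
pose D := M - ones p *m a.
pose B := row_base D.
pose V := D *m pinvmx B.
have VB : V *m B = D by rewrite /V /B mulmxKpV // eq_row_base submx_refl.
have Bfree : row_free B := row_base_free D.
have cM : forall c : 'rV_p, c *m ones p = 1 -> c *m V *m B = c *m M - a.
  by move=> c c1; rewrite -mulmxA VB /D mulmxBr mulmxA c1 mul1mx.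
have key : forall t : 'rV_(\rank D), conv_rows V t <-> nonneg_vec (a + t *m B).
  move=> t; split.
    case/conv_rowsE=> c [c0 [c1 ->]]; rewrite cM // addrC subrK.
    by apply: (@nonneg_conv p q M M0); apply/conv_rowsE; exists c.
  move=> nn.
  have aff : aff_rows M (a + t *m B).
    apply/aff_rowsE.
    have sub : (t *m B <= D)%MS by have := submxMl t B; rewrite /B eq_row_base.
    pose c := t *m B *m pinvmx D.
    have ec : c *m D = t *m B by rewrite mulmxKpV.
    pose s := (c *m ones p) 0 0.
    exists (c + (1 - s) *: delta_mx 0 i0); split.
      rewrite mulmxDl -scalemxAl -rowE (mx11_scalar (c *m ones p)) -/s.
      by apply/matrixP => x y; rewrite !ord1 !mxE /= mulr1n mulr1 addrC subrK.
    rewrite -ec /D mulmxBr mulmxA (mx11_scalar (c *m ones p)) -/s mul_scalar_mx.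
    rewrite mulmxDl -scalemxAl -rowE -/a scalerBl scale1r.
    by rewrite addrCA addrA.
  have := (H _).2 (conj aff nn) => /conv_rowsE [mu [mu0 [mu1 e]]].
  apply/conv_rowsE; exists mu; split => //; split => //.
  apply: (row_free_inj Bfree) => /=.
  by rewrite cM // -e addrAC subrr add0r.
exists (\rank D), (conv_rows V); split.
  exists (row i0 V), (row k V); split; first exact: delta_conv.
  split; first exact: delta_conv.
  move=> e; move/eqP: nik; apply.
  have : row i0 (V *m B) = row k (V *m B) by rewrite (row_mul i0 V B) (row_mul k V B) e.
  rewrite VB /D !linearB /=.
  by rewrite !rowones => /addIr.
exists V, (- B^T), (a^T); split; first by [].
split.
  move=> t; rewrite key; split => h j; have := h j.
    by rewrite mulNmx -trmx_mul !mxE -subr_ge0 opprK.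
  by rewrite mulNmx -trmx_mul !mxE -subr_ge0 opprK.
by rewrite opprK tr_row_mx !trmxK mul_row_col VB /D addrC subrK.
Qed.
End H.

Theorem corollary2p8 (R : realType) (p q : nat) (M : 'M[R]_(p, q)) :
  (forall i j, 0 <= M i j) -> (2 <= \rank M)%N ->
  (is_slack_matrix M <->
   (forall x : 'rV[R]_q, conv_rows M x <-> (aff_rows M x /\ nonneg_vec x))).
Proof.
move=> M0 rk; split; last exact: bwd.
case=> n [P [_ [V [W [w [HV [HW HM]]]]]]].
exact: (@fwd R p q n M M0 P V W w HV HW HM).
Qed.
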